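(* If a sign pattern matrix $A$ allows algebraic positivity, then every super-pattern of $A$ allows algebraic positivity.
   Context: A sign pattern matrix is a matrix with entries in $\{+,-,0\}$; its qualitative class $Q(A)$ is the set of real matrices obtained by replacing each $+$ by some positive number, each $-$ by some negative number and each $0$ by $0$. A real square matrix $M$ is algebraically positive if there is a real polynomial $f$ such that every entry of $f(M)$ is positive; $A$ allows algebraic positivity if some matrix in $Q(A)$ is algebraically positive. A sign pattern $X$ is a subpattern of $A$ if $X$ is obtained from $A$ by replacing some (possibly none) of its nonzero entries with $0$; then $A$ is a super-pattern of $X$. *)

(* Defs.v *)
From mathcomp Require Import all_boot all_order all_algebra.
Set Implicit Arguments. Unset Strict Implicit. Unset Printing Implicit Defensive.
Import Order.TTheory GRing.Theory Num.Theory.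
Local Open Scope ring_scope.

Inductive sign := SPos | SNeg | SZero.

Definition spattern (n : nat) := 'M[sign]_n.

Definition has_sign (R : realDomainType) (s : sign) (x : R) : Prop :=
  match s with
  | SPos => 0 < x
  | SNeg => x < 0
  | SZero => x = 0
  end.

Definition in_qual_class (R : realDomainType) (n : nat)
    (A : spattern n) (M : 'M[R]_n) : Prop :=
  forall i j, has_sign (A i j) (M i j).

Definition poly_mx_eval (R : realDomainType) (n : nat)
    (f : {poly R}) (M : 'M[R]_n) : 'M[R]_n :=
  \sum_(i < size f) f`_i *: (M ^+ i).

Definition alg_positive (R : realDomainType) (n : nat) (M : 'M[R]_n) : Prop :=
  exists f : {poly R}, forall i j, 0 < (poly_mx_eval f M) i j.

Definition allows_alg_pos (R : realDomainType) (n : nat) (A : spattern n) : Prop :=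
  exists M : 'M[R]_n, in_qual_class A M /\ alg_positive M.

Definition subpattern (n : nat) (X A : spattern n) : Prop :=
  forall i j, X i j = A i j \/ X i j = SZero.

(* Main.v *)
Require Import Defs.
From mathcomp Require Import all_boot all_order all_algebra.
From mathcomp Require Import reals.
From mathcomp Require Import ring lra.
Set Implicit Arguments. Unset Strict Implicit. Unset Printing Implicit Defensive.
Import Order.TTheory GRing.Theory Num.Theory.
Local Open Scope ring_scope.

Section Aux.
Variable R : realType.

Definition pf (g : R -> R) := exists p : {poly R}, forall t, g t = p.[t].

Lemma pf_const c : pf (fun _ => c).
Proof. by exists c%:P => t; rewrite hornerC. Qed.

Lemma pf_add g h : pf g -> pf h -> pf (fun t => g t + h t).
Proof. by move=> [p Hp] [q Hq]; exists (p + q) => t; rewrite hornerD Hp Hq. Qed.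

Lemma pf_mul g h : pf g -> pf h -> pf (fun t => g t * h t).
Proof. by move=> [p Hp] [q Hq]; exists (p * q) => t; rewrite hornerM Hp Hq. Qed.

Lemma pf_ext g h : (forall t, g t = h t) -> pf h -> pf g.
Proof. by move=> e [p Hp]; exists p => t; rewrite e Hp. Qed.

Lemma pf_id : pf (fun t => t).
Proof. by exists 'X => t; rewrite hornerX. Qed.

Lemma pf_sum (I : finType) (F : I -> R -> R) :
  (forall l, pf (F l)) -> pf (fun t => \sum_l F l t).
Proof.
move=> H; have [P HP] := fin_all_exists H.
exists (\sum_l P l) => t; rewrite horner_sum; apply: eq_bigr => l _; exact: HP.
Qed.

Lemma poly_bound (p : {poly R}) : exists C, forall t, `|t| <= 1 -> `|p.[t]| <= C.
Proof.
elim/poly_ind: p => [|p c [C HC]].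
  by exists 0 => t _; rewrite horner0 normr0.
exists (C + `|c|) => t Ht; rewrite hornerMXaddC.
apply: (le_trans (ler_normD _ _)); rewrite lerD2r normrM.
have h1 := HC t Ht; have h2 : 0 <= `|p.[t]| by [].
have h3 : 0 <= `|t| by [].
nra.
Qed.

Lemma poly_lip (p : {poly R}) : exists C, 0 <= C /\
  forall t, `|t| <= 1 -> `|p.[t] - p.[0]| <= C * `|t|.
Proof.
elim/poly_ind: p => [|p c _].
  by exists 0; split => // t _; rewrite !horner0 subrr normr0 mul0r.
have [C HC] := poly_bound p.
exists (Num.max C 0); split; first by rewrite le_max lexx orbT.
move=> t Ht; rewrite !hornerMXaddC mulr0 add0r addrK normrM.
apply: ler_wpM2r => //; apply: le_trans (HC t Ht) _; by rewrite le_max lexx.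
Qed.

Lemma poly_pos (p : {poly R}) : 0 < p.[0] ->
  exists d, 0 < d /\ forall t, 0 < t <= d -> 0 < p.[t].
Proof.
move=> p0; have [C [C0 HC]] := poly_lip p.
set a := p.[0] in p0 HC *.
exists (a / (a + C + 1)); split; first by rewrite divr_gt0 //; lra.
move=> t /andP[t0 td].
have hd : a / (a + C + 1) <= 1 by rewrite ler_pdivrMr; lra.
have ht1 : `|t| <= 1 by rewrite ger0_norm; lra.
have := HC t ht1; rewrite (ger0_norm (ltW t0)) => H.
have H2 : t * (a + C + 1) <= a by rewrite -ler_pdivlMr //; lra.
have := ler_normlW H.
move: (ler_norml (p.[t] - a) (C * t)); rewrite H => /esym /andP[H3 _].
nra.
Qed.

End Aux.

Definition sval (R : realType) (s : sign) : R :=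
  match s with SPos => 1 | SNeg => -1 | SZero => 0 end.

Definition Emx (R : realType) n (A B : spattern n) : 'M[R]_n :=
  \matrix_(i, j) match A i j with SZero => sval R (B i j) | _ => 0 end.

Lemma pf_entries (R : realType) n (M E : 'M[R]_n) (f : {poly R}) i j :
  pf (fun t => poly_mx_eval f (M + t *: E) i j).
Proof.
have Hk : forall k (i j : 'I_n), pf (fun t => ((M + t *: E) ^+ k) i j).
  elim=> [|k IH] i0 j0.
    exact: pf_const.
  eapply pf_ext; first (move=> t; rewrite exprS mxE; reflexivity).
  apply: pf_sum => l; apply: pf_mul => //.
  eapply pf_ext; first (move=> t; rewrite !mxE; reflexivity).
  by apply: pf_add; [exact: pf_const | apply: pf_mul; [exact: pf_id|exact: pf_const]].
rewrite /poly_mx_eval.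
eapply pf_ext; first (move=> t; rewrite summxE; reflexivity).
apply: pf_sum => l.
eapply pf_ext; first (move=> t; rewrite mxE; reflexivity).
by apply: pf_mul; [exact: pf_const | exact: Hk].
Qed.

Theorem theorem3p7 (R : realType) (n : nat) (A B : spattern n) :
  allows_alg_pos R A -> subpattern A B -> allows_alg_pos R B.
Proof.
move=> [M [HM [f Hf]]] Hsub.
set E := Emx R A B.
have Hd : forall ij : 'I_n * 'I_n, exists d : R, 0 < d /\
    forall t, 0 < t <= d -> 0 < poly_mx_eval f (M + t *: E) ij.1 ij.2.
  move=> [i j] /=.
  have [p Hp] := pf_entries M E f i j.
  have p0 : 0 < p.[0] by rewrite -Hp scale0r addr0.
  have [d [d0 Hd]] := poly_pos p0.
  by exists d; split => // t Ht; rewrite Hp; apply: Hd.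
have [D HD] := fin_all_exists Hd.
pose d := \big[Order.min/1]_(ij : 'I_n * 'I_n) D ij.
have d0 : 0 < d.
  apply/bigmin_gtP; split; first exact: ltr01.
  by move=> ij _; case: (HD ij).
exists (M + d *: E); split.
  move=> i j; rewrite !mxE.
  have := HM i j; case: (Hsub i j) => ->; case: (B i j) => //= h;
    rewrite ?h ?mulr0 ?addr0 ?add0r ?mulr1 //.
  - by rewrite mulrN1 oppr_lt0.
exists f => i j.
case: (HD (i, j)) => _ /(_ d); apply.
by rewrite d0 /=; exact: (bigmin_le _ (i, j)).
Qed.
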